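(* Let $p,q$ be distinct propositional letters, define $p^0:=q\looparrowright p$, $p^{n+1}:=p\to p^n$, and for $T\subseteq\omega\setminus\{0\}$ let $\Lambda_T:=\{q\looparrowright p^m:m\in T\}$. If $P$ and $T$ are non-empty subsets of $\omega\setminus\{0\}$ with $P\neq T$, then $\mathcal{F}\Lambda_P\neq\mathcal{F}\Lambda_T$.
   Context: Language: propositional letters $\Phi=\{p_0,p_1,\dots\}$; connectives $\neg$, $\lor,\wedge,\to,\leftrightarrow,\vartriangle,\looparrowright$; $\mathsf{FOR}$ the set of all formulas. A substitution is an endomorphism of the free formula algebra. An Epstein model is $\langle v,\mathfrak{R}\rangle$ with $v:\Phi\to\{0,1\}$ and $\mathfrak{R}\subseteq\mathsf{FOR}^2$; truth: letters via $v$, boolean connectives classical, $\vartriangle$: both arguments true and pair in $\mathfrak{R}$; $\looparrowright$: material implication true and pair in $\mathfrak{R}$. $\mathcal{F}$ is the least set containing all classical tautologies of the language and the axioms $(p\looparrowright q)\to(p\to q)$, $(p\vartriangle q)\leftrightarrow((p\looparrowright q)\wedge(p\wedge q))$, closed under uniform substitution and modus ponens; for $\Lambda\subseteq\mathsf{FOR}$, $\mathcal{F}\Lambda$ is the least set containing $\mathcal{F}\cup\Lambda$ closed under uniform substitution and modus ponens (equivalently, the formulas derivable by modus ponens from $\mathcal{F}$ and all substitution instances of members of $\Lambda$). $\mathcal{F}$ is sound and strongly complete for the class of all Epstein models. *)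

(* Defs.v *)
From Stdlib Require Import Arith.

Inductive form : Type :=
| Var  : nat -> form
| Neg  : form -> form
| Or   : form -> form -> form
| And  : form -> form -> form
| Imp  : form -> form -> form
| Iff  : form -> form -> form
| Tri  : form -> form -> form
| Loop : form -> form -> form.

Fixpoint subst (s : nat -> form) (f : form) : form :=
  match f with
  | Var n => s n
  | Neg a => Neg (subst s a)
  | Or a b => Or (subst s a) (subst s b)
  | And a b => And (subst s a) (subst s b)
  | Imp a b => Imp (subst s a) (subst s b)
  | Iff a b => Iff (subst s a) (subst s b)
  | Tri a b => Tri (subst s a) (subst s b)
  | Loop a b => Loop (subst s a) (subst s b)
  end.

Fixpoint beval (w : form -> bool) (f : form) : bool :=
  match f with
  | Var _ => w f
  | Neg a => negb (beval w a)
  | Or a b => beval w a || beval w b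
  | And a b => beval w a && beval w b
  | Imp a b => implb (beval w a) (beval w b)
  | Iff a b => Bool.eqb (beval w a) (beval w b)
  | Tri _ _ => w f
  | Loop _ _ => w f
  end.

Definition classical_tautology (f : form) : Prop :=
  forall w : form -> bool, beval w f = true.

Definition p0 := Var 0.
Definition p1 := Var 1.

Definition ax_loop : form := Imp (Loop p0 p1) (Imp p0 p1).
Definition ax_tri : form := Iff (Tri p0 p1) (And (Loop p0 p1) (And p0 p1)).

Inductive FL (Lam : form -> Prop) : form -> Prop :=
| FL_taut : forall f, classical_tautology f -> FL Lam f
| FL_ax_loop : FL Lam ax_loop
| FL_ax_tri : FL Lam ax_tri
| FL_lam : forall f, Lam f -> FL Lam f
| FL_subst : forall s f, FL Lam f -> FL Lam (subst s f)
| FL_mp : forall f g, FL Lam f -> FL Lam (Imp f g) -> FL Lam g.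

Fixpoint ppow (p q : nat) (n : nat) : form :=
  match n with
  | O => Loop (Var q) (Var p)
  | S k => Imp (Var p) (ppow p q k)
  end.

Definition LamT (p q : nat) (T : nat -> Prop) (f : form) : Prop :=
  exists m, T m /\ f = Loop (Var q) (ppow p q m).

(* Main.v *)
Require Import Defs.
From Stdlib Require Import Arith Bool Classical.

Fixpoint truth (v : nat -> bool) (R : form -> form -> bool) (f : form) : bool :=
  match f with
  | Var n => v n
  | Neg a => negb (truth v R a)
  | Or a b => truth v R a || truth v R b
  | And a b => truth v R a && truth v R b
  | Imp a b => implb (truth v R a) (truth v R b)
  | Iff a b => Bool.eqb (truth v R a) (truth v R b)
  | Tri a b => truth v R a && truth v R b && R a b
  | Loop a b => implb (truth v R a) (truth v R b) && R a b
  end.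

Lemma beval_truth v R f : beval (truth v R) f = truth v R f.
Proof. induction f; simpl; try rewrite IHf; try rewrite IHf1, IHf2; reflexivity. Qed.

Lemma truth_subst v R s f :
  truth v R (subst s f) =
  truth (fun n => truth v R (s n)) (fun a b => R (subst s a) (subst s b)) f.
Proof. induction f; simpl; try rewrite IHf; try rewrite IHf1, IHf2; reflexivity. Qed.

Lemma subst_comp s s' g : subst s (subst s' g) = subst (fun n => subst s (s' n)) g.
Proof. induction g; simpl; try rewrite IHg; try rewrite IHg1, IHg2; reflexivity. Qed.

Lemma subst_id g : subst (fun n => Var n) g = g.
Proof. induction g; simpl; try rewrite IHg; try rewrite IHg1, IHg2; reflexivity. Qed.

Fixpoint gpow (P Q : form) (n : nat) : form :=
  match n with
  | O => Loop Q P
  | S k => Imp P (gpow P Q k)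
  end.

Lemma ppow_gpow p q n : ppow p q n = gpow (Var p) (Var q) n.
Proof. induction n; simpl; try rewrite IHn; reflexivity. Qed.

Lemma subst_gpow s P Q n : subst s (gpow P Q n) = gpow (subst s P) (subst s Q) n.
Proof. induction n; simpl; try rewrite IHn; reflexivity. Qed.

Lemma gpow_inj P Q P' Q' k m : gpow P Q k = gpow P' Q' m -> k = m.
Proof.
  revert m; induction k; destruct m; simpl; intros H; try discriminate; auto.
  injection H; intros; f_equal; eauto.
Qed.

Definition Cls (p q : nat) (T : nat -> Prop) v R :=
  forall s m, T m -> truth v R (subst s (Loop (Var q) (ppow p q m))) = true.

Lemma sound p q T f : FL (LamT p q T) f -> forall v R, Cls p q T v R -> truth v R f = true.
Proof.
  induction 1; intros v R HC.
  - rewrite <- beval_truth; apply H.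
  - simpl; destruct (v 0), (v 1), (R p0 p1); reflexivity.
  - simpl; destruct (v 0), (v 1), (R p0 p1); reflexivity.
  - destruct H as [m [Hm ->]]. specialize (HC (fun n => Var n) m Hm).
    rewrite subst_id in HC; exact HC.
  - rewrite truth_subst. apply IHFL. intros s' m Hm.
    rewrite <- (truth_subst v R s), subst_comp. apply HC; auto.
  - specialize (IHFL1 v R HC); specialize (IHFL2 v R HC); simpl in IHFL2.
    rewrite IHFL1 in IHFL2; exact IHFL2.
Qed.

Definition feqb (a b : form) : bool.
Proof.
  assert (D : forall x y : form, {x = y} + {x <> y}) by (decide equality; apply Nat.eq_dec).
  exact (if D a b then true else false).
Defined.

Lemma feqb_spec a b : feqb a b = true <-> a = b.
Proof.
  unfold feqb. destruct (_ : {a = b} + {a <> b}); split; intros; congruence.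
Qed.

Lemma key p q (T : nat -> Prop) m :
  (forall n, T n -> 0 < n) -> ~ T m ->
  ~ FL (LamT p q T) (Loop (Var q) (ppow p q m)).
Proof.
  intros HT Hm HF.
  set (v := fun n => if Nat.eqb n q then false else true).
  set (R := fun a b => negb (feqb a (Var q) && feqb b (gpow (Var p) (Var q) m))).
  assert (HC : Cls p q T v R).
  { intros s k Hk. simpl. rewrite ppow_gpow, subst_gpow. simpl.
    set (P := s p); set (Q := s q).
    assert (Hk0 : k <> m) by (intro; subst; tauto).
    assert (R1 : R Q (gpow P Q k) = true).
    { unfold R. destruct (feqb (gpow P Q k) _) eqn:E.
      - apply feqb_spec in E. apply gpow_inj in E. tauto.
      - destruct (feqb Q _); reflexivity. }
    rewrite R1, andb_true_r.
    destruct (truth v R Q) eqn:EQ; [|reflexivity].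
    assert (RQ : forall b, R Q b = true).
    { intro b; unfold R. destruct (feqb Q (Var q)) eqn:E; [|reflexivity].
      apply feqb_spec in E. rewrite E in EQ. simpl in EQ. unfold v in EQ.
      rewrite Nat.eqb_refl in EQ; discriminate. }
    simpl.
    destruct (truth v R P) eqn:EP.
    + assert (forall j, truth v R (gpow P Q j) = true).
      { induction j; simpl. rewrite EQ, EP, RQ; reflexivity. rewrite EP, IHj; reflexivity. }
      apply H.
    + specialize (HT k Hk). destruct k; [inversion HT|]. simpl. rewrite EP; reflexivity. }
  pose proof (sound _ _ _ _ HF v R HC) as H.
  rewrite ppow_gpow in H. simpl in H. unfold v in H at 1. rewrite Nat.eqb_refl in H.
  simpl in H. unfold R in H.
  assert (E1 : feqb (Var q) (Var q) = true) by (apply feqb_spec; reflexivity).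
  assert (E2 : feqb (gpow (Var p) (Var q) m) (gpow (Var p) (Var q) m) = true)
    by (apply feqb_spec; reflexivity).
  rewrite E1, E2 in H. discriminate.
Qed.

Theorem mainTheorem9 (p q : nat) (P T : nat -> Prop) :
  p <> q ->
  (forall n, P n -> 0 < n) -> (exists n, P n) ->
  (forall n, T n -> 0 < n) -> (exists n, T n) ->
  ~ (forall n, P n <-> T n) ->
  ~ (forall f, FL (LamT p q P) f <-> FL (LamT p q T) f).
Proof.
  intros _ HP _ HT _ Hne Heq.
  destruct (classic (exists m, (P m /\ ~ T m) \/ (T m /\ ~ P m))) as [[m [[H1 H2]|[H1 H2]]]|Hn].
  - apply (key p q T m HT H2). apply Heq. apply FL_lam. exists m; auto.
  - apply (key p q P m HP H2). apply Heq. apply FL_lam. exists m; auto.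
  - apply Hne. intro n. split; intro H; apply NNPP; intro H'; apply Hn; exists n; auto.
Qed.
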